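(* Let $f:\mathbb N\to\mathbb N$ be a function, let $(G,d_G)$ be a countable group with a proper left invariant metric which is of growth type at most $f$, and let $(H,d_H)$ be another countable group with a proper left invariant metric. Then: (1) every subset $A\subseteq G$ (with the restricted metric) is of growth type at most $f$; (2) if there is a coarse embedding $H\to G$, then $H$ is of growth type at most $f$; (3) if $G$ is finitely generated, then $G$ has classical growth at most $f$; moreover, the growth type of $G$ exists and coincides with its classical growth.
   Context: A proper left invariant metric is $d(g,h)=\|g^{-1}h\|$ for a proper norm ($\|g\|=0$ iff $g=1$, $\|g\|=\|g^{-1}\|$, subadditive, finite balls). An $s$-scale chain of length $m$ from $x$ to $y$ is $x=x_0,\dots,x_m=y$ with $d(x_i,x_{i+1})<s$. For a metric space $X$, $g\in X$, $s>0$, $n\in\mathbb N$, $A_g^{(n,s)}$ is the set of $h\in X$ joined to $g$ by an $s$-scale chain in $X$ of length $n$, and $gr_{(s,g)}(n)=\#A_g^{(n,s)}$. $u\preceq v$ means there is $C>0$ with $u(x)\le Cv(Cx)$ for large $x$; $u,v$ have the same type if $u\preceq v\preceq u$. $X$ is of growth type at most $f$ if $gr_{(s,g)}\preceq f$ for all $g,s$; its growth type is $f$ if moreover $f\preceq gr_{(s,g)}$ for some $g,s$. For a finitely generated group with a word metric, its classical growth is the type of $n\mapsto\#B(1,n)$. A coarse embedding is a map that is a coarse equivalence onto its image, where $f$ is coarse if for every $\delta>0$ there is $\epsilon>0$ with $d(x,y)\le\delta\Rightarrow d(f(x),f(y))\le\epsilon$. *)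

(* Defs.v *)
From Stdlib Require Import Reals List Arith.
Import ListNotations.
Open Scope R_scope.
Set Implicit Arguments.

Record Group := {
  gcar :> Type;
  gmul : gcar -> gcar -> gcar;
  ginv : gcar -> gcar;
  gone : gcar;
  gmulA : forall x y z, gmul x (gmul y z) = gmul (gmul x y) z;
  gmul1l : forall x, gmul gone x = x;
  gmulVl : forall x, gmul (ginv x) x = gone }.

Definition countable (X : Type) : Prop :=
  exists e : X -> nat, forall x y, e x = e y -> x = y.

Definition finite_set {X : Type} (P : X -> Prop) : Prop :=
  exists l : list X, forall x, P x -> In x l.

Definition is_proper_norm (G : Group) (N : G -> R) : Prop :=
  (forall g, N g = 0 <-> g = gone G) /\
  (forall g, N (ginv G g) = N g) /\
  (forall g h, N (gmul G g h) <= N g + N h) /\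
  (forall r, finite_set (fun g => N g <= r)).

Definition proper_left_inv_metric (G : Group) (d : G -> G -> R) : Prop :=
  exists N, is_proper_norm G N /\ forall g h, d g h = N (gmul G (ginv G g) h).

Definition chain {X : Type} (d : X -> X -> R) (s : R) (n : nat) (x y : X) : Prop :=
  exists c : nat -> X, c 0%nat = x /\ c n = y /\
    forall i, (i < n)%nat -> d (c i) (c (S i)) < s.

Definition Aset {X : Type} (d : X -> X -> R) (g : X) (s : R) (n : nat) : X -> Prop :=
  fun h => chain d s n g h.

Definition card_le {X : Type} (P : X -> Prop) (m : nat) : Prop :=
  exists l : list X, (length l <= m)%nat /\ forall x, P x -> In x l.

Definition gr_preceq {X : Type} (d : X -> X -> R) (g : X) (s : R) (f : nat -> nat) : Prop :=
  exists C : nat, (1 <= C)%nat /\ exists N : nat, forall n, (N <= n)%nat ->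
    card_le (Aset d g s n) (C * f (C * n))%nat.

Definition preceq_gr {X : Type} (f : nat -> nat) (d : X -> X -> R) (g : X) (s : R) : Prop :=
  exists C : nat, (1 <= C)%nat /\ exists N : nat, forall n, (N <= n)%nat ->
    exists l : list X, NoDup l /\ (forall x, In x l -> Aset d g s (C * n)%nat x) /\
      (f n <= C * length l)%nat.

Definition fun_preceq (u v : nat -> nat) : Prop :=
  exists C : nat, (1 <= C)%nat /\ exists N : nat, forall x, (N <= x)%nat ->
    (u x <= C * v (C * x))%nat.

Definition growth_at_most {X : Type} (d : X -> X -> R) (f : nat -> nat) : Prop :=
  forall (g : X) (s : R), 0 < s -> gr_preceq d g s f.

Definition growth_type {X : Type} (d : X -> X -> R) (f : nat -> nat) : Prop :=
  growth_at_most d f /\ exists (g : X) (s : R), 0 < s /\ preceq_gr f d g s.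

Definition sub_dist {X : Type} (d : X -> X -> R) (A : X -> Prop) :
  {x : X | A x} -> {x : X | A x} -> R :=
  fun a b => d (proj1_sig a) (proj1_sig b).

Definition coarse_map {X Y : Type} (dX : X -> X -> R) (dY : Y -> Y -> R) (f : X -> Y) : Prop :=
  forall delta, 0 < delta -> exists eps, 0 < eps /\
    forall x y, dX x y <= delta -> dY (f x) (f y) <= eps.

Definition close {X Y : Type} (dY : Y -> Y -> R) (f g : X -> Y) : Prop :=
  exists K, forall x, dY (f x) (g x) <= K.

Definition coarse_equiv {X Y : Type} (dX : X -> X -> R) (dY : Y -> Y -> R) (f : X -> Y) : Prop :=
  coarse_map dX dY f /\ exists g : Y -> X, coarse_map dY dX g /\
    close dX (fun x => g (f x)) (fun x => x) /\ close dY (fun y => f (g y)) (fun y => y).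

Definition image {X Y : Type} (f : X -> Y) : Y -> Prop := fun y => exists x, f x = y.

Definition coarse_embedding {X Y : Type} (dX : X -> X -> R) (dY : Y -> Y -> R) (f : X -> Y) : Prop :=
  coarse_equiv dX (sub_dist dY (image f))
    (fun x => exist (image f) (f x) (ex_intro _ x eq_refl)).

Definition is_letter (G : Group) (S : list G) (x : G) : Prop :=
  In x S \/ In (ginv G x) S.

Definition word_prod (G : Group) (l : list G) : G := fold_right (gmul G) (gone G) l.

Definition word_len_le (G : Group) (S : list G) (x : G) (n : nat) : Prop :=
  exists l : list G, (length l <= n)%nat /\ Forall (is_letter G S) l /\ word_prod G l = x.

Definition generates (G : Group) (S : list G) : Prop :=
  forall x : G, exists n, word_len_le G S x n.

Definition ball_count (G : Group) (S : list G) (beta : nat -> nat) : Prop :=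
  forall n, exists l : list G, NoDup l /\ length l = beta n /\
    forall x, In x l <-> word_len_le G S x n.

(* Main.v *)
Require Import Defs.
From Stdlib Require Import Reals List.
From Stdlib Require Import Arith Lia Lra Classical ProofIrrelevance.
Import ListNotations.
Open Scope R_scope.

Lemma g_mulV (G : Group) (x : G) : gmul G x (ginv G x) = gone G.
Proof.
  pose proof (gmulA G (ginv G (ginv G x)) (ginv G x) (gmul G x (ginv G x))) as E1.
  rewrite gmulVl, gmul1l in E1.
  rewrite (gmulA G (ginv G x) x (ginv G x)), gmulVl, gmul1l, gmulVl in E1.
  symmetry; exact E1.
Qed.

Lemma g_mul1r (G : Group) (x : G) : gmul G x (gone G) = x.
Proof. rewrite <- (gmulVl G x), gmulA, g_mulV, gmul1l. reflexivity. Qed.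

Lemma g_canc (G : Group) (g h : G) : gmul G g (gmul G (ginv G g) h) = h.
Proof. rewrite gmulA, g_mulV, gmul1l. reflexivity. Qed.

Lemma chain_pad {X} (d : X -> X -> R) s n k x y :
  (forall z, d z z < s) -> (n <= k)%nat -> chain d s n x y -> chain d s k x y.
Proof.
  intros Hz Hnk [c [H0 [Hn Hs]]].
  exists (fun i => c (Nat.min i n)). repeat split.
  - rewrite Nat.min_0_l; auto.
  - rewrite Nat.min_r by lia; auto.
  - intros i Hi. destruct (Nat.lt_ge_cases i n).
    + rewrite Nat.min_l by lia. rewrite Nat.min_l by lia. apply Hs; auto.
    + rewrite !Nat.min_r by lia. apply Hz.
Qed.

Lemma sub_list {X} (A : X -> Prop) (l : list X) :
  exists l' : list {x | A x}, (length l' <= length l)%nat /\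
    forall x, In (proj1_sig x) l -> In x l'.
Proof.
  induction l as [|y l IH].
  - exists nil. split; simpl; auto.
  - destruct IH as [l' [Hl Hin]].
    destruct (classic (A y)) as [Ay|nAy].
    + exists (exist _ y Ay :: l'). split. simpl; lia.
      intros [x px] Hx; simpl in Hx; destruct Hx as [E|E].
      * left. subst. f_equal. apply proof_irrelevance.
      * right. apply (Hin (exist _ x px)). exact E.
    + exists l'. split. simpl; lia.
      intros [x px] Hx; simpl in Hx; destruct Hx as [E|E].
      * subst. contradiction.
      * apply (Hin (exist _ x px)); exact E.
Qed.

Lemma exist_eq {Y} (P : Y -> Prop) y1 y2 (p1 : P y1) (p2 : P y2) :
  y1 = y2 -> exist P y1 p1 = exist P y2 p2.
Proof. intros ->. f_equal. apply proof_irrelevance. Qed.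

Lemma fiber_list {X Y Z : Type} (phi : X -> Y) (psi : {y | image phi y} -> Z) (l : list Y) :
  exists L : list Z, (length L <= length l)%nat /\
   forall x, In (phi x) l -> In (psi (exist (image phi) (phi x) (ex_intro _ x eq_refl))) L.
Proof.
  induction l as [|y l IH].
  - exists nil. split; simpl; auto.
  - destruct IH as [L [HL Hin]].
    destruct (classic (image phi y)) as [[x0 E0]|nI].
    + exists (psi (exist (image phi) (phi x0) (ex_intro _ x0 eq_refl)) :: L).
      split. simpl; lia.
      intros x Hx; simpl in Hx; destruct Hx as [E|E].
      * left. f_equal. apply exist_eq. congruence.
      * right. apply Hin. exact E.
    + exists L. split. simpl; lia.
      intros x Hx; simpl in Hx; destruct Hx as [E|E].
      * exfalso. apply nI. exists x. symmetry; exact E.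
      * apply Hin; exact E.
Qed.

Lemma flat_map_len {A B} (F : A -> list B) m L :
  (forall a, length (F a) = m) -> length (flat_map F L) = (length L * m)%nat.
Proof. intros HF; induction L; simpl; auto. rewrite length_app, HF, IHL. lia. Qed.

Lemma word_prod_app (G : Group) l1 l2 :
  word_prod G (l1 ++ l2) = gmul G (word_prod G l1) (word_prod G l2).
Proof. induction l1; simpl. rewrite gmul1l; auto. rewrite IHl1, gmulA; auto. Qed.

Lemma wll_mono (G : Group) S (x : G) m n :
  word_len_le G S x m -> (m <= n)%nat -> word_len_le G S x n.
Proof. intros [l [H1 H2]] H. exists l. split; [lia|auto]. Qed.

Lemma wll_mul (G : Group) S (x y : G) m n :
  word_len_le G S x m -> word_len_le G S y n -> word_len_le G S (gmul G x y) (m+n).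
Proof.
  intros [l1 [H1 [F1 P1]]] [l2 [H2 [F2 P2]]]. exists (l1++l2).
  rewrite length_app; split; [lia|split]. apply Forall_app; auto.
  rewrite word_prod_app; subst; auto.
Qed.

Lemma wll_list (G : Group) S (gen : generates G S) (T : list G) :
  exists K, forall t, In t T -> word_len_le G S t K.
Proof.
  induction T as [|a T IH].
  - exists 0%nat; intros t [].
  - destruct IH as [K HK]. destruct (gen a) as [k Hk]. exists (Nat.max K k).
    intros t [E|E].
    + subst; apply (wll_mono _ _ _ k); auto; lia.
    + apply (wll_mono _ _ _ K); auto; lia.
Qed.

Lemma chain_word (G : Group) (N : G -> R) (dG : G -> G -> R)
  (HdG : forall g h, dG g h = N (gmul G (ginv G g) h)) Sg s T K
  (HT : forall t, N t < s -> In t T) (HK : forall t, In t T -> word_len_le G Sg t K) g n h :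
  chain dG s n g h -> word_len_le G Sg (gmul G (ginv G g) h) (K*n).
Proof.
  intros [c [c0 [cn cs]]]. subst h.
  assert (forall i, (i <= n)%nat -> word_len_le G Sg (gmul G (ginv G g) (c i)) (K*i)).
  { induction i; intros Hi.
    - rewrite c0, gmulVl. exists nil. split; [simpl; lia | split; [constructor | reflexivity]].
    - assert (E: gmul G (ginv G g) (c (S i)) =
                 gmul G (gmul G (ginv G g) (c i)) (gmul G (ginv G (c i)) (c (S i)))).
      { rewrite <- gmulA. rewrite g_canc. reflexivity. }
      rewrite E. replace (K * S i)%nat with (K*i + K)%nat by lia.
      apply wll_mul. apply IHi; lia. apply HK, HT. rewrite <- HdG. apply cs; lia. }
  apply H; lia.
Qed.

Lemma firstn_S_nth {A} (l : list A) i d :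
  (i < length l)%nat -> firstn (S i) l = firstn i l ++ [nth i l d].
Proof.
  revert i; induction l as [|a l IH]; intros i Hi; simpl in Hi. lia.
  destruct i. reflexivity. simpl. f_equal. simpl in IH. rewrite <- IH by lia. reflexivity.
Qed.

Lemma word_chain (G : Group) (N : G -> R) (dG : G -> G -> R)
  (HdG : forall g h, dG g h = N (gmul G (ginv G g) h)) (HN0 : N (gone G) = 0) S s
  (HS : forall a, is_letter G S a -> N a < s) (Hs : 0 < s) x n :
  word_len_le G S x n -> chain dG s n (gone G) x.
Proof.
  intros [l [Hl [Hf Hp]]]. subst x.
  exists (fun i => word_prod G (firstn i l)). split; [reflexivity|split].
  - rewrite firstn_all2 by lia. reflexivity.
  - intros i Hi. rewrite HdG. destruct (Nat.lt_ge_cases i (length l)).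
    + rewrite (firstn_S_nth l i (gone G)) by auto.
      rewrite word_prod_app. simpl. rewrite g_mul1r.
      rewrite gmulA, gmulVl, gmul1l. apply HS.
      rewrite Forall_forall in Hf. apply Hf. apply nth_In. auto.
    + rewrite !firstn_all2 by lia. rewrite gmulVl, HN0. exact Hs.
Qed.

Lemma bound_list (G : Group) (N : G -> R) (S : list G) :
  exists s, 0 < s /\ forall x, In x S -> N x < s.
Proof.
  induction S as [|a S IH].
  - exists 1. split; [lra| intros x []].
  - destruct IH as [s [Hs HS]]. exists (Rmax s (N a + 1)). split.
    + apply Rlt_le_trans with s; auto. apply Rmax_l.
    + intros x [E|E].
      * subst. apply Rlt_le_trans with (N x + 1). lra. apply Rmax_r.
      * apply Rlt_le_trans with s. auto. apply Rmax_l.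
Qed.

Theorem mainTheorem8 (f : nat -> nat) (G : Group) (dG : G -> G -> R)
  (H : Group) (dH : H -> H -> R)
  (cG : countable G) (cH : countable H)
  (hG : proper_left_inv_metric G dG) (hH : proper_left_inv_metric H dH)
  (hf : growth_at_most dG f) :
  (forall A : G -> Prop, growth_at_most (sub_dist dG A) f) /\
  ((exists phi : H -> G, coarse_embedding dH dG phi) -> growth_at_most dH f) /\
  (forall S : list G, generates G S ->
     forall beta : nat -> nat, ball_count G S beta ->
       fun_preceq beta f /\ growth_type dG beta).
Proof.
  destruct hG as [NG [[HG0 [HGinv [HGtri HGfin]]] HdG]].
  assert (HGself : forall z, dG z z = 0).
  { intro z. rewrite HdG, gmulVl. apply HG0. reflexivity. }
  split; [|split].
  - intros A a s Hs. destruct (hf (proj1_sig a) s Hs) as [C [HC [N0 HN]]].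
    exists C. split; auto. exists N0. intros n Hn.
    destruct (HN n Hn) as [l [Hl Hin]].
    destruct (sub_list A l) as [l' [Hl' Hin']].
    exists l'. split. lia. intros x [c [c0 [cn cs]]].
    apply Hin'. apply Hin. exists (fun i => proj1_sig (c i)).
    split; [rewrite c0; auto|split;[rewrite cn; auto|]].
    intros i Hi. apply (cs i Hi).
  - intros [phi [Hcm [psi [_ [[K HK] _]]]]] h0 s Hs.
    destruct (Hcm s Hs) as [eps [Heps Hce]].
    assert (Hs': 0 < eps + 1) by lra.
    destruct (hf (phi h0) (eps+1) Hs') as [C [HC [N0 HN]]].
    destruct hH as [NH [[HH0 [HHinv [HHtri HHfin]]] HdH]].
    destruct (HHfin K) as [TK HTK].
    set (m := length TK).
    exists (S m * C)%nat. split; [lia|]. exists N0. intros n Hn.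
    destruct (HN (S m * n)%nat ltac:(nia)) as [l [Hl Hin]].
    destruct (fiber_list phi psi l) as [L [HL HinL]].
    exists (flat_map (fun z => map (gmul H z) TK) L). split.
    + rewrite (flat_map_len _ m) by (intro; rewrite length_map; reflexivity).
      replace (S m * C * n)%nat with (C * (S m * n))%nat by ring.
      nia.
    + intros x Hx. apply in_flat_map.
      exists (psi (exist (image phi) (phi x) (ex_intro _ x eq_refl))). split.
      * apply HinL. apply Hin. apply chain_pad with n.
        { intro z. rewrite HGself. lra. }
        { nia. }
        destruct Hx as [c [c0 [cn cs]]].
        exists (fun i => phi (c i)). split; [rewrite c0; auto|split;[rewrite cn; auto|]].
        intros i Hi. pose proof (Hce (c i) (c (S i)) (Rlt_le _ _ (cs i Hi))) as E.
        unfold sub_dist in E; simpl in E. lra.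
      * apply in_map_iff. eexists. split. apply g_canc.
        apply HTK. rewrite <- HdH. apply HK.
  - intros S gen beta Hb.
    destruct (bound_list G NG S) as [s0 [Hs0 HS0]].
    assert (HSl : forall a, is_letter G S a -> NG a < s0).
    { intros a [E|E]. auto. rewrite <- HGinv. auto. }
    assert (HG1 : NG (gone G) = 0) by (apply HG0; reflexivity).
    split.
    + destruct (hf (gone G) s0 Hs0) as [C [HC [N0 HN]]]. exists C. split; auto.
      exists N0. intros n Hn.
      destruct (HN n Hn) as [l [Hl Hin]]. destruct (Hb n) as [Lb [ND [Hlen Hiff]]].
      rewrite <- Hlen. eapply Nat.le_trans; [|exact Hl]. apply NoDup_incl_length; auto.
      intros x Hx. apply Hin. eapply word_chain; eauto. apply Hiff; auto.
    + split.
      * intros g s Hs. destruct (HGfin s) as [T HT].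
        destruct (wll_list G S gen T) as [K HK].
        exists (Datatypes.S K). split; [lia|]. exists 0%nat. intros n _.
        destruct (Hb (Datatypes.S K * n)%nat) as [Lb [ND [Hlen Hiff]]].
        exists (map (gmul G g) Lb). split.
        { rewrite length_map, Hlen. nia. }
        intros h Hh. apply in_map_iff. exists (gmul G (ginv G g) h). split.
        { apply g_canc. }
        apply Hiff. apply wll_mono with (K*n)%nat; [|nia].
        eapply chain_word; eauto. intros t Ht. apply HT. lra.
      * exists (gone G), s0. split; auto. exists 1%nat. split; auto.
        exists 0%nat. intros n _. destruct (Hb n) as [Lb [ND [Hlen Hiff]]].
        exists Lb. split; auto. split.
        { intros x Hx. rewrite Nat.mul_1_l. eapply word_chain; eauto. apply Hiff; auto. }
        lia.
Qed.
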